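(* Let $\mathcal E$ be an exact category. (1) For any subset $N\subseteq\mathsf M(\mathcal E)$, the subcategory $\mathcal D_N:=\{X\in\mathcal E\mid[X]\in N\}$ is closed under S-equivalences. (2) The maps $\mathcal D\mapsto\mathsf M_{\mathcal D}:=\{[X]\mid X\in\mathcal D\}$ and $N\mapsto\mathcal D_N$ are mutually inverse bijections between the set of subcategories of $\mathcal E$ closed under S-equivalences and the power set of $\mathsf M(\mathcal E)$.
   Context: All categories are skeletally small; subcategories are full and closed under isomorphisms. An exact category $\mathcal E$ is an additive full subcategory of an abelian category closed under extensions; conflations are short exact sequences with all terms in $\mathcal E$; an inflation is the first map of a conflation. The Grothendieck monoid $\mathsf M(\mathcal E)$ is the commutative monoid with a map $X\mapsto[X]$ on isomorphism classes with $[0]=0$ and $[Y]=[X]+[Z]$ for each conflation $0\to X\to Y\to Z\to0$, universal among such maps to commutative monoids. An admissible subobject series of $X$ is a chain $0=X_0\to X_1\to\cdots\to X_n=X$ of inflations (each $X_{i-1}\to X_i$ an inflation compatible with the inflations into $X$), with factors $X_i/X_{i-1}$ the cokernels. Objects $X,Y$ are S-equivalent, $X\sim_SY$, if they have admissible subobject series $(X_i)_{i=0}^n$, $(Y_i)_{i=0}^n$ of the same length and a permutation $\sigma$ of $\{1,\dots,n\}$ with $X_i/X_{i-1}\cong Y_{\sigma(i)}/Y_{\sigma(i)-1}$ for all $i$. A subcategory $\mathcal D$ is closed under S-equivalences if $X\in\mathcal D$ and $X\sim_SY$ imply $Y\in\mathcal D$. *)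

(* Defs.v *)
From HB Require Import structures.
From mathcomp Require Import all_boot fingroup perm all_algebra.
Set Implicit Arguments.
Unset Strict Implicit.
Unset Printing Implicit Defensive.
Import GRing.Theory.
Local Open Scope ring_scope.

(* Preadditive categories: Hom-sets are abelian groups, composition is
   bilinear.  Composition is written in diagrammatic order: comp f g = g o f. *)
Record PreaddCat := {
  Ob : Type;
  Hom : Ob -> Ob -> zmodType;
  idm : forall X, Hom X X;
  comp : forall X Y Z, Hom X Y -> Hom Y Z -> Hom X Z;
  comp_assoc : forall X Y Z W (f : Hom X Y) (g : Hom Y Z) (h : Hom Z W),
      comp (comp f g) h = comp f (comp g h);
  comp_idl : forall X Y (f : Hom X Y), comp (idm X) f = f;
  comp_idr : forall X Y (f : Hom X Y), comp f (idm Y) = f;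
  comp_addl : forall X Y Z (f f' : Hom X Y) (g : Hom Y Z),
      comp (f + f') g = comp f g + comp f' g;
  comp_addr : forall X Y Z (f : Hom X Y) (g g' : Hom Y Z),
      comp f (g + g') = comp f g + comp f g'
}.
Arguments idm {_} X.
Arguments comp {_ X Y Z} f g.

Section CatDefs.
Variable C : PreaddCat.
Local Notation Ob := (Ob C).
Local Notation Hom := (@Hom C).

Definition is_iso (X Y : Ob) (f : Hom X Y) : Prop :=
  exists g : Hom Y X, comp f g = idm X /\ comp g f = idm Y.

Definition isomorphic (X Y : Ob) : Prop := exists f : Hom X Y, is_iso f.

Definition is_zero_obj (Z : Ob) : Prop :=
  forall Y : Ob, (forall f g : Hom Z Y, f = g) /\ (forall f g : Hom Y Z, f = g).

Definition is_biproduct (X1 X2 P : Ob) (i1 : Hom X1 P) (i2 : Hom X2 P)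
    (p1 : Hom P X1) (p2 : Hom P X2) : Prop :=
  [/\ comp i1 p1 = idm X1, comp i2 p2 = idm X2, comp i1 p2 = 0,
      comp i2 p1 = 0 & comp p1 i1 + comp p2 i2 = idm P].

Definition is_kernel (K X Y : Ob) (k : Hom K X) (f : Hom X Y) : Prop :=
  comp k f = 0 /\
  forall W (h : Hom W X), comp h f = 0 -> exists! h' : Hom W K, comp h' k = h.

Definition is_cokernel (X Y Q : Ob) (f : Hom X Y) (c : Hom Y Q) : Prop :=
  comp f c = 0 /\
  forall W (h : Hom Y W), comp f h = 0 -> exists! h' : Hom Q W, comp c h' = h.

Definition is_mono (X Y : Ob) (f : Hom X Y) : Prop :=
  forall W (g h : Hom W X), comp g f = comp h f -> g = h.
Definition is_epi (X Y : Ob) (f : Hom X Y) : Prop :=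
  forall W (g h : Hom Y W), comp f g = comp f h -> g = h.

Definition is_abelian : Prop :=
  (exists Z, is_zero_obj Z) /\
  [/\ forall X1 X2, exists P i1 i2 p1 p2, @is_biproduct X1 X2 P i1 i2 p1 p2,
      forall X Y (f : Hom X Y), exists K (k : Hom K X), is_kernel k f,
      forall X Y (f : Hom X Y), exists Q (c : Hom Y Q), is_cokernel f c,
      forall X Y (f : Hom X Y), is_mono f -> exists Z (g : Hom Y Z), is_kernel f g
    & forall X Y (f : Hom X Y), is_epi f -> exists W (g : Hom W X), is_cokernel g f].

Definition is_ses (X Y Z : Ob) (f : Hom X Y) (g : Hom Y Z) : Prop :=
  is_kernel f g /\ is_cokernel f g.

(* Subcategories (full, closed under isomorphisms) are predicates on objects. *)
Definition iso_closed (P : Ob -> Prop) : Prop :=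
  forall X Y, P X -> isomorphic X Y -> P Y.

(* E is an exact category: additive full subcategory, closed under
   isomorphisms and extensions. *)
Definition is_exact_subcat (E : Ob -> Prop) : Prop :=
  [/\ iso_closed E,
      exists Z, is_zero_obj Z /\ E Z,
      forall X1 X2 P i1 i2 p1 p2, @is_biproduct X1 X2 P i1 i2 p1 p2 ->
        E X1 -> E X2 -> E P
    & forall X Y Z (f : Hom X Y) (g : Hom Y Z), is_ses f g -> E X -> E Z -> E Y].

Definition conflation (E : Ob -> Prop) (X Y Z : Ob) (f : Hom X Y) (g : Hom Y Z)
  : Prop := [/\ E X, E Y, E Z & is_ses f g].

Definition inflation (E : Ob -> Prop) (X Y : Ob) (f : Hom X Y) : Prop :=
  exists Z (g : Hom Y Z), conflation E f g.

(* Admissible subobject series 0 = X_0 -> X_1 -> ... -> X_n (= X) of length n.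
   ser_u i : X_i -> X are the inflations into X (ser_u n an isomorphism),
   ser_a i : X_i -> X_{i+1} the inflations of the chain, compatible with
   ser_u, and ser_F i (with ser_b i) the cokernel factor X_{i+1}/X_i. *)
Record adm_series (E : Ob -> Prop) (X : Ob) (n : nat) := {
  ser_X : nat -> Ob;
  ser_F : nat -> Ob;
  ser_a : forall i, Hom (ser_X i) (ser_X i.+1);
  ser_b : forall i, Hom (ser_X i.+1) (ser_F i);
  ser_u : forall i, Hom (ser_X i) X;
  ser_zero : is_zero_obj (ser_X 0);
  ser_confl : forall i, (i < n)%N -> conflation E (ser_a i) (ser_b i);
  ser_infl : forall i, (i <= n)%N -> inflation E (ser_u i);
  ser_compat : forall i, (i < n)%N -> comp (ser_a i) (ser_u i.+1) = ser_u i;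
  ser_top : is_iso (ser_u n)
}.

Definition S_equiv (E : Ob -> Prop) (X Y : Ob) : Prop :=
  exists n (sx : adm_series E X n) (sy : adm_series E Y n) (s : 'S_n),
    forall i : 'I_n, isomorphic (ser_F sx i) (ser_F sy (s i)).

Definition is_subcat (E D : Ob -> Prop) : Prop :=
  (forall X, D X -> E X) /\ iso_closed D.

Definition closed_under_S (E D : Ob -> Prop) : Prop :=
  forall X Y, D X -> S_equiv E X Y -> D Y.

Definition additive_class (E : Ob -> Prop) (T : nmodType) (f : Ob -> T) : Prop :=
  [/\ forall X Y, E X -> isomorphic X Y -> f X = f Y,
      forall Z, E Z -> is_zero_obj Z -> f Z = 0
    & forall X Y Z (a : Hom X Y) (b : Hom Y Z), conflation E a b ->
        f Y = f X + f Z].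

Definition monoid_hom (M T : nmodType) (phi : M -> T) : Prop :=
  phi 0 = 0 /\ forall a b, phi (a + b) = phi a + phi b.

Definition is_grothendieck_monoid (E : Ob -> Prop) (M : nmodType) (cls : Ob -> M)
  : Prop :=
  additive_class E cls /\
  forall (T : nmodType) (f : Ob -> T), additive_class E f ->
    exists phi : M -> T,
      [/\ monoid_hom phi, (forall X, E X -> phi (cls X) = f X)
        & forall psi : M -> T, monoid_hom psi ->
            (forall X, E X -> psi (cls X) = f X) -> forall m, psi m = phi m].

Definition D_of (E : Ob -> Prop) (M : Type) (cls : Ob -> M) (N : M -> Prop)
  : Ob -> Prop := fun X => E X /\ N (cls X).
Definition M_of (M : Type) (cls : Ob -> M) (D : Ob -> Prop) : M -> Prop :=
  fun m => exists X, D X /\ cls X = m.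

End CatDefs.

Record AbelianCat := { acat :> PreaddCat; acat_abelian : is_abelian acat }.

(* Main.v *)
Require Import Defs.
From HB Require Import structures.
From mathcomp Require Import all_boot fingroup perm all_algebra.
From mathcomp Require Import boolp.
Set Implicit Arguments.
Unset Strict Implicit.
Unset Printing Implicit Defensive.
Import GRing.Theory.
Local Open Scope ring_scope.

Section Alg.
Variable C : PreaddCat.
Local Notation Hom := (@Defs.Hom C).
Local Notation Ob := (Defs.Ob C).
Local Notation comp := (@Defs.comp C _ _ _).

Lemma comp0l (X Y Z : Ob) (g : Hom Y Z) : comp (0 : Hom X Y) g = 0.
Proof.
have h := comp_addl (0 : Hom X Y) 0 g; rewrite addr0 in h.
by apply: (addrI (comp (0 : Hom X Y) g)); rewrite addr0 -h.
Qed.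
Lemma comp0r (X Y Z : Ob) (f : Hom X Y) : comp f (0 : Hom Y Z) = 0.
Proof.
have h := comp_addr f (0 : Hom Y Z) 0; rewrite addr0 in h.
by apply: (addrI (comp f (0 : Hom Y Z))); rewrite addr0 -h.
Qed.

Lemma zero_homL (Z Y : Ob) (f : Hom Z Y) : is_zero_obj Z -> f = 0.
Proof. by move=> hz; case: (hz Y) => h _; apply: h. Qed.
Lemma zero_homR (Z Y : Ob) (f : Hom Y Z) : is_zero_obj Z -> f = 0.
Proof. by move=> hz; case: (hz Y) => _ h; apply: h. Qed.

Lemma iso_refl (X : Ob) : isomorphic X X.
Proof. by exists (idm X), (idm X); rewrite comp_idl. Qed.
Lemma iso_sym (X Y : Ob) : isomorphic X Y -> isomorphic Y X.
Proof. by case=> f [g [h1 h2]]; exists g, f. Qed.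
Lemma iso_trans (X Y Z : Ob) : isomorphic X Y -> isomorphic Y Z -> isomorphic X Z.
Proof.
case=> f [f' [h1 h2]] [g [g' [h3 h4]]]; exists (comp f g), (comp g' f'); split.
  by rewrite comp_assoc -(comp_assoc g) h3 comp_idl h1.
by rewrite comp_assoc -(comp_assoc f') h2 comp_idl h4.
Qed.

Lemma zero_iso (Z Z' : Ob) : is_zero_obj Z -> is_zero_obj Z' -> isomorphic Z Z'.
Proof.
move=> h h'; exists 0, 0; split; first by case: (h Z) => a _; apply: a.
by case: (h' Z') => a _; apply: a.
Qed.

Lemma bp_ses (X1 X2 P : Ob) i1 i2 p1 p2 :
  @is_biproduct C X1 X2 P i1 i2 p1 p2 -> is_ses i1 p2.
Proof.
case=> e1 e2 e3 e4 e5; split; split => //.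
- move=> W h hh; exists (comp h p1); split.
    rewrite comp_assoc -[RHS](comp_idr h) -e5 comp_addr -(comp_assoc h p2) hh.
    by rewrite comp0l addr0.
  by move=> h' <-; rewrite comp_assoc e1 comp_idr.
- move=> W h hh; exists (comp i2 h); split.
    rewrite -comp_assoc -[RHS](comp_idl h) -e5 comp_addl (comp_assoc p1) hh.
    by rewrite comp0r add0r.
  by move=> h' <-; rewrite -comp_assoc e2 comp_idl.
Qed.


Lemma c2id (X Y W : Ob) (f : Hom X Y) (g : Hom Y X) (x : Hom X W) :
  comp f g = idm X -> comp f (comp g x) = x.
Proof. by move=> h; rewrite -comp_assoc h comp_idl. Qed.
Lemma c20 (X Y Z W : Ob) (f : Hom X Y) (g : Hom Y Z) (x : Hom Z W) :
  comp f g = 0 -> comp f (comp g x) = 0.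
Proof. by move=> h; rewrite -comp_assoc h comp0l. Qed.

Ltac norm := repeat progress rewrite ?comp_addl ?comp_addr ?comp0l ?comp0r ?comp_assoc ?comp_idl ?comp_idr ?addr0 ?add0r ?addrA.

Lemma comp_infl_ses (X Y Z W P Q : Ob) (f : Hom X Y) (g : Hom Y Z)
  j1 j2 q1 q2 k1 k2 r1 r2 :
  is_ses f g -> @is_biproduct C Y W P j1 j2 q1 q2 ->
  @is_biproduct C Z W Q k1 k2 r1 r2 ->
  is_ses (comp f j1) (comp q1 (comp g k1) + comp q2 k2).
Proof.
move=> [[fg0 kerf] [_ cokg]] [e1 e2 e3 e4 e5] [d1 d2 d3 d4 d5].
have e1' := c2id _ e1; have e2' := c2id _ e2; have e3' := c20 _ e3;
have e4' := c20 _ e4; have d1' := c2id _ d1; have d2' := c2id _ d2;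
have d3' := c20 _ d3; have d4' := c20 _ d4; have fg0' := c20 _ fg0.
have z0 : comp (comp f j1) (comp q1 (comp g k1) + comp q2 k2) = 0.
  by norm; rewrite ?e1' ?e3' ?fg0' ?comp0r ?addr0.
split; split => //.
- move=> V h hh.
  have hq2 : comp h q2 = 0.
    have := congr1 (fun x => comp x r2) hh; rewrite comp0l; norm.
    by rewrite ?d3 ?d2 ?comp0r ?comp_idr ?add0r.
  have hq1g : comp (comp h q1) g = 0.
    have := congr1 (fun x => comp x r1) hh; rewrite comp0l; norm.
    by rewrite ?d1 ?d4 ?comp0r ?comp_idr ?addr0 -comp_assoc.
  case: (kerf V _ hq1g) => h' [hh' uh'].
  exists h'; split.
    rewrite -comp_assoc hh' comp_assoc -[RHS](comp_idr h) -e5 comp_addr.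
    by rewrite -(comp_assoc h q2) hq2 comp0l addr0.
  by move=> x hx; apply: uh'; rewrite -hx !comp_assoc e1 comp_idr.
- move=> V h hh.
  have hh2 : comp f (comp j1 h) = 0 by rewrite -comp_assoc.
  case: (cokg V _ hh2) => t [ht ut].
  exists (comp r1 t + comp r2 (comp j2 h)); split.
    norm; rewrite ?d1' ?d3' ?d4' ?d2' ?comp0r ?addr0 ?add0r ht.
    by rewrite -!comp_assoc -comp_addl e5 comp_idl.
  move=> x hx.
  have k2h : comp k2 x = comp j2 h.
    rewrite -hx; norm; by rewrite ?e4' ?e2' ?add0r.
  have k1h : comp g (comp k1 x) = comp j1 h.
    rewrite -hx; norm; by rewrite ?e1' ?e3' ?addr0.
  rewrite (ut _ k1h) -k2h -!comp_assoc -comp_addl d5 comp_idl //.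
Qed.


Ltac bsimp := repeat (norm; match goal with
 | H : comp ?a ?b = idm _ |- context [comp ?a (comp ?b ?x)] => rewrite (c2id x H)
 | H : comp ?a ?b = idm _ |- context [comp ?a ?b] => rewrite H
 | H : comp ?a ?b = 0 |- context [comp ?a (comp ?b ?x)] => rewrite (c20 x H)
 | H : comp ?a ?b = 0 |- context [comp ?a ?b] => rewrite H
 | H : comp ?a ?b + comp ?c ?d = idm _ |- context [comp ?a ?b + comp ?c ?d] => rewrite H
 end); norm.

Lemma bp_ext_out (X1 X2 P V : Ob) i1 i2 p1 p2 (x y : Hom V P) :
  @is_biproduct C X1 X2 P i1 i2 p1 p2 ->
  comp x p1 = comp y p1 -> comp x p2 = comp y p2 -> x = y.
Proof.
case=> _ _ _ _ e5 h1 h2.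
by rewrite -(comp_idr x) -(comp_idr y) -e5 !comp_addr -!comp_assoc h1 h2.
Qed.
Lemma bp_ext_in (X1 X2 P V : Ob) i1 i2 p1 p2 (x y : Hom P V) :
  @is_biproduct C X1 X2 P i1 i2 p1 p2 ->
  comp i1 x = comp i1 y -> comp i2 x = comp i2 y -> x = y.
Proof.
case=> _ _ _ _ e5 h1 h2.
by rewrite -(comp_idl x) -(comp_idl y) -e5 !comp_addl !comp_assoc h1 h2.
Qed.

Lemma bp_comm (X1 X2 P : Ob) i1 i2 p1 p2 :
  @is_biproduct C X1 X2 P i1 i2 p1 p2 -> @is_biproduct C X2 X1 P i2 i1 p2 p1.
Proof. by case=> e1 e2 e3 e4 e5; split => //; rewrite addrC. Qed.

Lemma bp_iso (X1 X2 P X1' X2' P' : Ob) i1 i2 p1 p2 i1' i2' p1' p2' :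
  @is_biproduct C X1 X2 P i1 i2 p1 p2 -> @is_biproduct C X1' X2' P' i1' i2' p1' p2' ->
  isomorphic X1 X1' -> isomorphic X2 X2' -> isomorphic P P'.
Proof.
move=> B B' [a [a' [ha1 ha2]]] [b [b' [hb1 hb2]]].
have [e1 e2 e3 e4 e5] := B; have [d1 d2 d3 d4 d5] := B'.
exists (comp p1 (comp a i1') + comp p2 (comp b i2')),
  (comp p1' (comp a' i1) + comp p2' (comp b' i2)); split.
  by bsimp.
by bsimp.
Qed.

Lemma bp_assoc (X Y Z P Q R : Ob) i1 i2 p1 p2 j1 j2 q1 q2 k1 k2 r1 r2 :
  @is_biproduct C X Y P i1 i2 p1 p2 -> @is_biproduct C P Z Q j1 j2 q1 q2 ->
  @is_biproduct C Y Z R k1 k2 r1 r2 ->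
  @is_biproduct C X R Q (comp i1 j1) (comp r1 (comp i2 j1) + comp r2 j2)
     (comp q1 p1) (comp q1 (comp p2 k1) + comp q2 k2).
Proof.
move=> B1 B2 B3.
have [e1 e2 e3 e4 e5] := B1; have [d1 d2 d3 d4 d5] := B2;
have [f1 f2 f3 f4 f5] := B3.
split; first by bsimp.
- by apply: (bp_ext_out B3); bsimp.
- by bsimp.
- by bsimp.
apply: (bp_ext_out B2); bsimp.
  by apply: (bp_ext_out B1); bsimp.
done.
Qed.

Lemma bp_unit (X Z : Ob) : is_zero_obj Z ->
  @is_biproduct C X Z X (idm X) 0 (idm X) 0.
Proof.
move=> hz; split; rewrite ?comp_idl ?comp0l ?addr0 //.
by case: (hz Z) => h _; apply: h.
Qed.

End Alg.

Definition sF (C : PreaddCat) (X Z W : Defs.Ob C) (i : nat) : Defs.Ob C :=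
  match i with 0 => X | 1 => Z | _ => W end.

Section Series.
Variable C : PreaddCat.
Local Notation Hom := (@Defs.Hom C).
Local Notation Ob := (Defs.Ob C).
Local Notation comp := (@Defs.comp C _ _ _).
Variable E : Ob -> Prop.
Hypothesis hE : is_exact_subcat E.
Variables (X Y Z W P Q Z0 : Ob) (f : Hom X Y) (g : Hom Y Z).
Variables (j1 : Hom Y P) (j2 : Hom W P) (q1 : Hom P Y) (q2 : Hom P W).
Variables (k1 : Hom Z Q) (k2 : Hom W Q) (r1 : Hom Q Z) (r2 : Hom Q W).
Hypotheses (hfg : conflation E f g) (hW : E W) (BP : is_biproduct j1 j2 q1 q2)
  (BQ : is_biproduct k1 k2 r1 r2) (hZ0 : is_zero_obj Z0) (EZ0 : E Z0).

Definition sX (i : nat) : Ob := match i with 0 => Z0 | 1 => X | 2 => Y | _ => P end.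
Definition sa (i : nat) : Hom (sX i) (sX i.+1) :=
  match i as n return Hom (sX n) (sX n.+1) with
  | 0 => 0 | 1 => f | 2 => j1 | _.+3 => idm P end.
Definition sb (i : nat) : Hom (sX i.+1) (sF X Z W i) :=
  match i as n return Hom (sX n.+1) (sF X Z W n) with
  | 0 => idm X | 1 => g | 2 => q2 | _.+3 => q2 end.
Definition su (i : nat) : Hom (sX i) P :=
  match i as n return Hom (sX n) P with
  | 0 => 0 | 1 => comp f j1 | 2 => j1 | _.+3 => idm P end.

Lemma ses_from0 (V : Ob) : is_ses (0 : Hom Z0 V) (idm V).
Proof. exact: bp_ses (bp_comm (bp_unit V hZ0)). Qed.
Lemma ses_to0 (V : Ob) : is_ses (idm V) (0 : Hom V Z0).
Proof. exact: bp_ses (bp_unit V hZ0). Qed.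

Lemma series_exists : exists s : adm_series E P 3, forall i, ser_F s i = sF X Z W i.
Proof.
have [hiso [Z1 [_ _]] hbp hext] := hE.
have [EX EY EZ sfg] := hfg.
have EP : E P by apply: (hbp _ _ _ _ _ _ _ BP).
have EQ : E Q by apply: (hbp _ _ _ _ _ _ _ BQ).
unshelve eexists (@Build_adm_series C E P 3 sX (sF X Z W) sa sb su hZ0 _ _ _ _).
- case=> [|[|[|i]]] //= _; split => //; first [exact: ses_from0 | exact: bp_ses BP].
- case=> [|[|[|[|i]]]] //= _.
  + by exists P, (idm P); split => //; apply: ses_from0.
  + by exists Q, (comp q1 (comp g k1) + comp q2 k2); split => //; exact: (comp_infl_ses sfg BP BQ).
  + by exists W, q2; split => //; apply: bp_ses BP.
  + by exists Z0, 0; split => //; apply: ses_to0.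
- case=> [|[|[|i]]] //= _; first by rewrite comp0l.
  by rewrite comp_idr.
- by exists (idm P); rewrite comp_idl.
- by [].
Qed.

End Series.

Section Mk.
Variables (U : Type) (z : U) (ad : U -> U -> U).
Hypotheses (hA : associative ad) (hC : commutative ad) (h0 : left_id z ad).
Definition MkT : Type := (fun _ _ _ _ _ => U) z ad hA hC h0.
HB.instance Definition _ := gen_eqMixin MkT.
HB.instance Definition _ := gen_choiceMixin MkT.
HB.instance Definition _ := GRing.isNmodule.Build MkT hA hC h0.
Lemma MkT_add (x y : MkT) : (x + y)%R = ad x y. Proof. by []. Qed.
Lemma MkT_zero : (0 : MkT)%R = z. Proof. by []. Qed.
End Mk.

Section Main.
Variables (A : AbelianCat) (E : Defs.Ob A -> Prop) (M : nmodType) (cls : Defs.Ob A -> M).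
Hypotheses (hE : is_exact_subcat E) (hG : is_grothendieck_monoid E cls).
Local Notation C := (acat A).
Local Notation Hom := (@Defs.Hom C).
Local Notation Ob := (Defs.Ob C).
Local Notation comp := (@Defs.comp C _ _ _).

Lemma S_equiv_sym (X Y : Ob) : S_equiv E X Y -> S_equiv E Y X.
Proof.
case=> n [sx [sy [s h]]]; exists n, sy, sx, s^-1%g => i.
by apply: iso_sym; have := h (s^-1%g i); rewrite permKV.
Qed.

Record BPd (X1 X2 : Ob) := { bO : Ob; bi1 : Hom X1 bO; bi2 : Hom X2 bO;
  bp1 : Hom bO X1; bp2 : Hom bO X2; bpP : is_biproduct bi1 bi2 bp1 bp2 }.

Lemma bpd_ex (X1 X2 : Ob) : exists b : BPd X1 X2, True.
Proof.
have [_ [H _ _ _ _]] := acat_abelian A.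
have [P [i1 [i2 [p1 [p2 h]]]]] := H X1 X2.
by exists (Build_BPd h).
Qed.
Definition bp (X1 X2 : Ob) : BPd X1 X2 := projT1 (cid (bpd_ex X1 X2)).
Local Notation "X (+) Y" := (bO (bp X Y)).

Lemma z0_ex : exists Z : Ob, is_zero_obj Z /\ E Z.
Proof. by case: hE. Qed.
Definition Z0 : Ob := projT1 (cid z0_ex).
Lemma Z0_zero : is_zero_obj Z0. Proof. exact: (projT2 (cid z0_ex)).1. Qed.
Lemma EZ0 : E Z0. Proof. exact: (projT2 (cid z0_ex)).2. Qed.

Lemma E_bp (X Y : Ob) : E X -> E Y -> E (X (+) Y).
Proof. by case: hE => _ _ h _; apply: h (bpP (bp X Y)). Qed.

Lemma bp_cong (X X' Y Y' : Ob) :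
  isomorphic X X' -> isomorphic Y Y' -> isomorphic (X (+) Y) (X' (+) Y').
Proof. exact: bp_iso (bpP _) (bpP _). Qed.

Lemma conf_S (X Y Z W : Ob) (f : Hom X Y) (g : Hom Y Z) :
  conflation E f g -> E W -> S_equiv E (Y (+) W) ((X (+) Z) (+) W).
Proof.
move=> hfg hW; have [EX EY EZ sfg] := hfg.
have [s1 h1] := series_exists hE hfg hW (bpP (bp Y W)) (bpP (bp Z W)) Z0_zero EZ0.
have hfg' : conflation E (bi1 (bp X Z)) (bp2 (bp X Z)).
  by split => //; [apply: E_bp | apply: bp_ses (bpP _)].
have [s2 h2] := series_exists hE hfg' hW (bpP (bp (X (+) Z) W)) (bpP (bp Z W)) Z0_zero EZ0.
exists 3, s1, s2, 1%g => i; rewrite h1 h2 perm1; exact: iso_refl.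
Qed.

Lemma cls_iso (X Y : Ob) : E X -> isomorphic X Y -> cls X = cls Y.
Proof. by case: hG => [[h _ _] _]; apply: h. Qed.
Lemma cls_zero (Z : Ob) : E Z -> is_zero_obj Z -> cls Z = 0.
Proof. by case: hG => [[_ h _] _]; apply: h. Qed.
Lemma cls_conf (X Y Z : Ob) (f : Hom X Y) (g : Hom Y Z) :
  conflation E f g -> cls Y = cls X + cls Z.
Proof. by case: hG => [[_ _ h] _]; apply: h. Qed.
Lemma cls_bp (X Y : Ob) : E X -> E Y -> cls (X (+) Y) = cls X + cls Y.
Proof.
move=> hX hY; apply: (@cls_conf _ _ _ (bi1 (bp X Y)) (bp2 (bp X Y))).
by split => //; [apply: E_bp | apply: bp_ses (bpP _)].
Qed.

Lemma cls_series (X : Ob) n (s : adm_series E X n) :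
  E X /\ cls X = \sum_(i < n) cls (ser_F s i).
Proof.
have key : forall k, (k <= n)%N ->
    E (ser_X s k) /\ cls (ser_X s k) = \sum_(i < k) cls (ser_F s i).
  elim=> [|k IH] hk.
    have [Z [g [EX0 _ _ _]]] := ser_infl s hk.
    by split => //; rewrite big_ord0; apply: cls_zero => //; apply: ser_zero.
  have hk' : (k < n)%N by [].
  have [EX _ EF _] := ser_confl s hk'.
  have [EXk IHk] := IH (ltnW hk).
  split; first by have [? [? [? ? ? ?]]] := ser_infl s hk.
  by rewrite big_ord_recr /= -IHk (cls_conf (ser_confl s hk')).
have [EXn hn] := key n (leqnn n).
have [Z [g [_ EX _ _]]] := ser_infl s (leqnn n).
split => //; rewrite -hn; symmetry; apply: cls_iso => //.
by exists (ser_u s n); apply: ser_top.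
Qed.

Lemma S_cls (X Y : Ob) : E X -> S_equiv E X Y -> E Y /\ cls X = cls Y.
Proof.
move=> hX [n [sx [sy [s h]]]].
have [_ ->] := cls_series sx; have [EY ->] := cls_series sy.
split => //.
rewrite [RHS](reindex_inj (@perm_inj _ s)) /=; apply: eq_bigr => i _.
apply: cls_iso (h i).
by have [_ _ ? _] := ser_confl sx (ltn_ord i).
Qed.

Lemma sig_ext (T : Type) (P : T -> Prop) (u v : {x | P x}) :
  proj1_sig u = proj1_sig v -> u = v.
Proof. by case: u => x hx; case: v => y hy /= e; subst y; congr exist; apply: Prop_irrelevance. Qed.

Definition Im := {m : M | exists X, E X /\ cls X = m}.
Definition im0 : Im := exist _ 0 (ex_intro _ Z0 (conj EZ0 (cls_zero EZ0 Z0_zero))).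
Lemma imadd_ex (u v : Im) : exists X, E X /\ cls X = proj1_sig u + proj1_sig v.
Proof.
case: u => a [X [hX ea]]; case: v => b [Y [hY eb]] /=.
by exists (X (+) Y); split; [apply: E_bp | rewrite cls_bp // ea eb].
Qed.
Definition imadd (u v : Im) : Im := exist _ _ (imadd_ex u v).
Lemma imA : associative imadd. Proof. by move=> x y z; apply: sig_ext => /=; rewrite addrA. Qed.
Lemma imC : commutative imadd. Proof. by move=> x y; apply: sig_ext => /=; rewrite addrC. Qed.
Lemma im0l : left_id im0 imadd. Proof. by move=> x; apply: sig_ext => /=; rewrite add0r. Qed.
Definition ImT := MkT imA imC im0l.

Definition f2 (X : Ob) : ImT :=
  match pselect (E X) with
  | left h => exist _ (cls X) (ex_intro _ X (conj h erefl))
  | right _ => im0 end.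
Lemma f2E (X : Ob) : E X -> proj1_sig (f2 X : Im) = cls X.
Proof. by rewrite /f2; case: pselect. Qed.

Lemma cls_surj (m : M) : exists X, E X /\ cls X = m.
Proof.
have addf2 : additive_class E f2.
  split.
  - move=> X Y hX hXY; have hY : E Y by case: hE => h _ _ _; apply: h hXY.
    by apply: sig_ext; rewrite !f2E //; apply: cls_iso.
  - by move=> Z hZ hz; apply: sig_ext; rewrite f2E // (cls_zero hZ hz).
  - move=> X Y Z a b hab; have [hX hY hZ _] := hab.
    by apply: sig_ext; rewrite MkT_add /= !f2E // (cls_conf hab).
have [phi [[ph0 phD] phc _]] := hG.2 _ _ addf2.
have [phi0 [_ _ u0]] := hG.2 _ _ hG.1.
have e1 : forall m, proj1_sig (phi m : Im) = phi0 m.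
  apply: u0; first split.
  - by rewrite ph0.
  - by move=> a b; rewrite phD.
  by move=> X hX; rewrite (phc X hX); exact: (f2E hX).
have e2 : forall m, m = phi0 m by apply: u0.
have := proj2_sig (phi m : Im); rewrite e1 -e2 => -[X hX]; by exists X.
Qed.

Section DPart.
Variable D : Ob -> Prop.
Hypotheses (hD : is_subcat E D) (hS : closed_under_S E D).

Definition eqv (X Y : Ob) := forall W, E W -> (D (X (+) W) <-> D (Y (+) W)).
Lemma eqv_refl X : eqv X X. Proof. by []. Qed.
Lemma eqv_sym X Y : eqv X Y -> eqv Y X. Proof. by move=> h W hW; split => /(h W hW). Qed.
Lemma eqv_trans X Y Z : eqv X Y -> eqv Y Z -> eqv X Z.
Proof. by move=> h1 h2 W hW; rewrite (h1 W hW) (h2 W hW). Qed.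

Lemma D_iso X Y : isomorphic X Y -> D X -> D Y.
Proof. by move=> h hX; apply: hD.2 hX h. Qed.
Lemma D_iso' X Y : isomorphic X Y -> D X <-> D Y.
Proof. by move=> h; split; apply: D_iso => //; apply: iso_sym. Qed.

Lemma iso_eqv X Y : isomorphic X Y -> eqv X Y.
Proof. by move=> h W _; apply: D_iso'; apply: bp_cong h (iso_refl _). Qed.

Lemma unit_iso X : isomorphic (X (+) Z0) X.
Proof. exact: bp_iso (bpP _) (bp_unit X Z0_zero) (iso_refl _) (iso_refl _). Qed.
Lemma assoc_iso X Y Z : isomorphic ((X (+) Y) (+) Z) (X (+) (Y (+) Z)).
Proof.
exact: bp_iso (bp_assoc (bpP (bp X Y)) (bpP (bp (X (+) Y) Z)) (bpP (bp Y Z)))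
  (bpP _) (iso_refl _) (iso_refl _).
Qed.
Lemma comm_iso X Y : isomorphic (X (+) Y) (Y (+) X).
Proof. exact: bp_iso (bp_comm (bpP (bp X Y))) (bpP _) (iso_refl _) (iso_refl _). Qed.

Lemma eqv_D X Y : eqv X Y -> D X <-> D Y.
Proof.
move=> h; rewrite -(D_iso' (unit_iso X)) -(D_iso' (unit_iso Y)).
exact: h EZ0.
Qed.

Lemma eqv_bpl X X' Z : E Z -> eqv X X' -> eqv (X (+) Z) (X' (+) Z).
Proof.
move=> hZ h W hW; rewrite (D_iso' (assoc_iso _ _ _)) (D_iso' (assoc_iso _ _ _)).
by apply: h; apply: E_bp.
Qed.
Lemma eqv_bpr X X' Z : E Z -> eqv X X' -> eqv (Z (+) X) (Z (+) X').
Proof.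
move=> hZ h; apply: eqv_trans (iso_eqv (comm_iso _ _)) _.
apply: eqv_trans (eqv_bpl hZ h) _; exact: iso_eqv (comm_iso _ _).
Qed.

Lemma conf_eqv (X Y Z : Ob) (f : Hom X Y) (g : Hom Y Z) :
  conflation E f g -> eqv Y (X (+) Z).
Proof.
move=> hfg W hW; have hS1 := conf_S hfg hW; split => hd.
  exact: hS hd hS1.
exact: hS hd (S_equiv_sym hS1).
Qed.

Definition cl (X : Ob) : Ob -> Prop := fun Y => E Y /\ eqv X Y.
Definition U := {P : Ob -> Prop | exists X, E X /\ P = cl X}.
Definition mkU (X : Ob) (h : E X) : U := exist _ (cl X) (ex_intro _ X (conj h erefl)).
Definition rep (u : U) : Ob := projT1 (cid (proj2_sig u)).
Lemma rep_spec u : E (rep u) /\ proj1_sig u = cl (rep u).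
Proof. exact: (projT2 (cid (proj2_sig u))). Qed.
Lemma Erep u : E (rep u). Proof. exact: (rep_spec u).1. Qed.

Lemma mkU_eq X Y hX hY : eqv X Y -> @mkU X hX = @mkU Y hY.
Proof.
move=> h; apply: sig_ext => /=; apply: funext => Z; apply: propext.
split=> -[hZ e]; split => //; [exact: eqv_trans (eqv_sym h) e | exact: eqv_trans h e].
Qed.
Lemma mkU_eqv X Y hX hY : @mkU X hX = @mkU Y hY -> eqv X Y.
Proof.
move=> e; have := congr1 (fun u : U => proj1_sig u Y) e => /= e'.
have : cl Y Y by split.
by rewrite -e' => -[].
Qed.
Lemma mkU_rep u : @mkU (rep u) (Erep u) = u.
Proof. by apply: sig_ext => /=; rewrite (rep_spec u).2. Qed.
Lemma rep_mk X hX : eqv (rep (@mkU X hX)) X.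
Proof.
apply: (@mkU_eqv _ _ (Erep _) hX); rewrite mkU_rep.
by apply: sig_ext.
Qed.

Definition uz : U := mkU EZ0.
Definition uad (u v : U) : U := mkU (E_bp (Erep u) (Erep v)).

Lemma uA : associative uad.
Proof.
move=> u v w; apply: mkU_eq.
apply: eqv_trans (eqv_bpr (Erep _) (rep_mk _)) _.
apply: eqv_trans (iso_eqv (iso_sym (assoc_iso _ _ _))) _.
exact: eqv_bpl (Erep _) (eqv_sym (rep_mk _)).
Qed.
Lemma uC : commutative uad.
Proof. by move=> u v; apply: mkU_eq; apply: iso_eqv; apply: comm_iso. Qed.
Lemma u0l : left_id uz uad.
Proof.
move=> u; rewrite -[RHS]mkU_rep; apply: mkU_eq.
apply: eqv_trans (eqv_bpl (Erep _) (rep_mk _)) _.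
apply: eqv_trans (iso_eqv (comm_iso _ _)) _.
exact: iso_eqv (unit_iso _).
Qed.
Definition UT := MkT uA uC u0l.

Definition fq (X : Ob) : UT :=
  match pselect (E X) with left h => mkU h | right _ => uz end.
Lemma fqE X (h : E X) : fq X = mkU h.
Proof. by rewrite /fq; case: pselect => // h'; apply: mkU_eq. Qed.

Lemma cls_eqv X Y : E X -> E Y -> cls X = cls Y -> eqv X Y.
Proof.
move=> hX hY e.
have addq : additive_class E fq.
  split.
  - move=> X1 Y1 hX1 hXY; have hY1 : E Y1 by case: hE => h _ _ _; apply: h hXY.
    by rewrite !fqE; apply: mkU_eq; apply: iso_eqv.
  - move=> Z hZ hz; rewrite fqE; apply: mkU_eq; apply: iso_eqv.
    exact: zero_iso hz Z0_zero.
  - move=> X1 Y1 Z1 a b hab; have [hX1 hY1 hZ1 _] := hab.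
    rewrite MkT_add /= !fqE; apply: mkU_eq.
    apply: eqv_trans (conf_eqv hab) _.
    apply: eqv_trans (eqv_bpl hZ1 (eqv_sym (rep_mk hX1))) _.
    exact: eqv_bpr (Erep _) (eqv_sym (rep_mk hZ1)).
have [phi [_ phc _]] := hG.2 _ _ addq.
apply: (@mkU_eqv _ _ hX hY); rewrite -!fqE -!phc //.
by rewrite e.
Qed.

End DPart.

End Main.

Theorem mainTheorem10 (A : AbelianCat) (E : Ob A -> Prop)
    (M : nmodType) (cls : Ob A -> M) :
  is_exact_subcat E -> is_grothendieck_monoid E cls ->
  (* (1) *)
  (forall N : M -> Prop, closed_under_S E (D_of E cls N)) /\
  (* (2) the maps are well defined and mutually inverse *)
  ((forall N : M -> Prop, is_subcat E (D_of E cls N)) /\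
   (forall N : M -> Prop, forall m, M_of cls (D_of E cls N) m <-> N m) /\
   (forall D : Ob A -> Prop, is_subcat E D -> closed_under_S E D ->
      forall X, D_of E cls (M_of cls D) X <-> D X)).
Proof.
move=> hE hG; split; last split; last split.
- move=> N X Y [hX hN] hXY; have [hY e] := S_cls hG hX hXY.
  by split => //; rewrite -e.
- move=> N; split; first by move=> X [].
  move=> X Y [hX hN] hXY; have hY : E Y by case: hE => h _ _ _; apply: h hXY.
  by split => //; rewrite -(cls_iso hG hX hXY).
- move=> N m; split; first by case=> X [[_ hN] <-].
  move=> hm; have [X [hX e]] := cls_surj hE hG m.
  by exists X; split => //; split => //; rewrite e.
- move=> D hD hS X; split.
    case=> hX [Y [hY e]].
    have EY : E Y by apply: hD.1.
    have := cls_eqv hE hG hD hS EY hX e.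
    by move/(eqv_D hE hD) => h; exact: h.1 hY.
  by move=> hX; split; [apply: hD.1 | exists X].
Qed.
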